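(* Let $Q$ be a probability measure on $\mathcal Z$ and $P_1,P_2\ll Q$ probability measures with densities $\rho_j=\frac{\mathrm dP_j}{\mathrm dQ}$ such that, for some $\varepsilon\ge0$, $\delta\ge0$, $$\int\max\{\rho_1-e^{\varepsilon}\rho_2,0\}\,\mathrm dQ\le\delta\quad\text{and}\quad\int\max\{\rho_2-e^{\varepsilon}\rho_1,0\}\,\mathrm dQ\le\delta.$$ Then there exists a probability measure $P_3\ll Q$ such that $d_{\mathrm{TV}}(P_1,P_3)\le\delta$ and $e^{-\varepsilon}\frac{\mathrm dP_2}{\mathrm dQ}(z)\le\frac{\mathrm dP_3}{\mathrm dQ}(z)\le e^{\varepsilon}\frac{\mathrm dP_2}{\mathrm dQ}(z)$ for $Q$-almost every $z$.
   Context: $d_{\mathrm{TV}}(P,P')=\sup_S|P(S)-P'(S)|=\int\max\{\frac{\mathrm dP}{\mathrm dQ}-\frac{\mathrm dP'}{\mathrm dQ},0\}\,\mathrm dQ$. *)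

(* Defs.v *)
From HB Require Import structures.
From mathcomp Require Import all_boot all_order all_algebra.
From mathcomp Require Import all_classical all_reals all_analysis.
Set Implicit Arguments. Unset Strict Implicit. Unset Printing Implicit Defensive.
Import Order.TTheory GRing.Theory Num.Theory.
Local Open Scope classical_set_scope.
Local Open Scope ring_scope.
Local Open Scope ereal_scope.

Definition dTV d (T : measurableType d) (R : realType)
  (P P' : set T -> \bar R) : \bar R :=
  ereal_sup [set `|P S - P' S| | S in [set S | measurable S]].

Definition is_density d (T : measurableType d) (R : realType)
  (Q : {measure set T -> \bar R}) (P : set T -> \bar R) (rho : T -> R) : Prop :=
  [/\ measurable_fun setT rho, (forall z, (0 <= rho z)%R) &
      forall A, measurable A -> P A = \int[Q]_(z in A) (rho z)%:E].

(* Main.v *)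
Require Import Defs.
From HB Require Import structures.
From mathcomp Require Import all_boot all_order all_algebra.
From mathcomp Require Import all_classical all_reals all_analysis.
From mathcomp Require Import ring lra measurable_realfun.
Import Order.TTheory GRing.Theory Num.Theory.
Local Open Scope classical_set_scope.
Local Open Scope ring_scope.

Section dens.
Context d (T : measurableType d) (R : realType) (Q : {measure set T -> \bar R}).
Local Open Scope ereal_scope.
Definition dens (f : T -> R) (mf : measurable_fun setT f) (f0 : forall x, (0 <= f x)%R)
  (f1 : \int[Q]_x (f x)%:E = 1) : set T -> \bar R := fun A => \int[Q]_(x in A) (f x)%:E.
Variables (f : T -> R) (mf : measurable_fun setT f) (f0 : forall x, (0 <= f x)%R)
  (f1 : \int[Q]_x (f x)%:E = 1).
Local Notation nu := (dens f mf f0 f1).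
Let nu0 : nu set0 = 0. Proof. by rewrite /nu /dens integral_set0. Qed.
Let nu_ge0 A : 0 <= nu A.
Proof. by apply: integral_ge0 => x _; rewrite lee_fin. Qed.
Let nu_sa : semi_sigma_additive nu.
Proof.
apply: semi_sigma_additive_nng_induced => //.
exact/measurable_EFinP.
Qed.
HB.instance Definition _ := isMeasure.Build _ _ _ nu nu0 nu_ge0 nu_sa.
Let nu_setT : nu setT = 1. Proof. exact: f1. Qed.
HB.instance Definition _ := @Measure_isProbability.Build _ _ R nu nu_setT.
End dens.


Lemma dTV_sym d (T : measurableType d) (R : realType) (P P' : probability T R) :
  dTV P P' = dTV P' P.
Proof.
rewrite /dTV; congr ereal_sup; apply/seteqP; split => _ [S mS <-];
  exists S => //;
  rewrite -(fineK (fin_num_measure P S mS)) -(fineK (fin_num_measure P' S mS));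
  by rewrite -!EFinB !abse_EFin distrC.
Qed.

Lemma tv_bound d (T : measurableType d) (R : realType) (Q : {measure set T -> \bar R})
  (P P' : probability T R) (f f' g : T -> R) (delta : R) :
  is_density Q P f -> is_density Q P' f' -> measurable_fun setT g ->
  (forall z, 0 <= g z) -> (\int[Q]_z (g z)%:E <= delta%:E)%E ->
  (forall z, f z <= f' z + g z) -> (dTV P P' <= delta%:E)%E.
Proof.
move=> [mf f0 Pf] [mf' f0' Pf'] mg g0 gd ff'.
have key : forall S, measurable S -> (P S <= P' S + delta%:E)%E.
  move=> S mS; rewrite Pf // Pf' //.
  apply: (@le_trans _ _ (\int[Q]_(z in S) ((f' z)%:E + (g z)%:E))%E).
    apply: ge0_le_integral => //.
    - by move=> x _; rewrite lee_fin.
    - by apply/measurable_EFinP; apply: measurable_funTS.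
    - apply: emeasurable_funD; apply/measurable_EFinP; exact: measurable_funTS.
    - by move=> x _; rewrite -EFinD lee_fin.
  rewrite ge0_integralD //; last 4 first.
  - by move=> x _; rewrite lee_fin.
  - by apply/measurable_EFinP; apply: measurable_funTS.
  - by move=> x _; rewrite lee_fin.
  - by apply/measurable_EFinP; apply: measurable_funTS.
  apply: leeD => //; apply: le_trans gd.
  apply: ge0_subset_integral => //.
  - exact/measurable_EFinP.
  - by move=> x _; rewrite lee_fin.
apply: ub_ereal_sup => _ [S mS <-].
have h1 := key S mS.
have h2 := key _ (measurableC mS).
rewrite !probability_setC // in h2.
move: h1 h2.
rewrite -(fineK (fin_num_measure P S mS)) -(fineK (fin_num_measure P' S mS)).
move: (fine (P S)) (fine (P' S)) => p p'.
move=> h1 h2; rewrite -[1%E]/(1%:E) -!EFinB -!EFinD !lee_fin in h1 h2.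
rewrite -EFinB abse_EFin lee_fin ler_norml; apply/andP; split; lra.
Qed.

Lemma clip_facts (R : realType) (r a b : R) : a <= b ->
  let c := Num.min (Num.max r a) b in
  [/\ a <= c, c <= b, r - c <= Num.max (r - b) 0 & c - r <= Num.max (a - r) 0].
Proof.
move=> ab /=.
rewrite /Num.max /Num.min /Order.max /Order.min.
repeat case: ifP; move=> *; split; lra.
Qed.

Lemma max_scale (R : realType) (s x : R) : 0 < s <= 1 ->
  Num.max (s * x) 0 <= Num.max x 0.
Proof.
move=> /andP [s0 s1]; rewrite /Num.max /Order.max.
repeat case: ifP; move=> *; nra.
Qed.

Lemma div01 (R : realType) (x y : R) : 0 <= x <= y -> 0 <= x / y <= 1.
Proof.
move=> /andP [x0 xy]; have [->|y0] := eqVneq y 0; first by rewrite invr0 mulr0 lexx ler01.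
have yp : 0 < y by rewrite lt_neqAle eq_sym y0 /= (le_trans x0).
apply/andP; split; first exact: divr_ge0 (ltW yp).
by rewrite ler_pdivrMr // mul1r.
Qed.

Theorem mainTheorem13 (d : measure_display) (Z : measurableType d) (R : realType)
  (Q P1 P2 : probability Z R) (rho1 rho2 : Z -> R) (eps delta : R) :
  (0 <= eps) -> (0 <= delta) ->
  P1 `<< Q -> P2 `<< Q ->
  is_density Q P1 rho1 -> is_density Q P2 rho2 ->
  (\int[Q]_z (Num.max (rho1 z - expR eps * rho2 z) 0)%:E <= delta%:E)%E ->
  (\int[Q]_z (Num.max (rho2 z - expR eps * rho1 z) 0)%:E <= delta%:E)%E ->
  exists (P3 : probability Z R) (rho3 : Z -> R),
    [/\ P3 `<< Q, is_density Q P3 rho3,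
        (dTV P1 P3 <= delta%:E)%E &
        {ae Q, forall z, expR (- eps) * rho2 z <= rho3 z <= expR eps * rho2 z}].
Proof.
move=> eps0 delta0 P1Q P2Q dens1 dens2 H1 H2.
have [m1 r1p P1d] := dens1; have [m2 r2p P2d] := dens2.
have int2 : (\int[Q]_z (rho2 z)%:E = 1)%E by rewrite -(probability_setT P2) P2d.
set ee := expR eps; set ei := expR (- eps).
have ee1 : 1 <= ee by have := expR_ge1Dx eps; rewrite /ee; lra.
have ei0 : 0 < ei by apply: expR_gt0.
have ei1 : ei <= 1 by rewrite /ei expR_le1; lra.
have eie : ei * ee = 1 by rewrite /ei /ee expRN mulVf // gt_eqF // expR_gt0.
pose c z := Num.min (Num.max (rho1 z) (ei * rho2 z)) (ee * rho2 z).
have mc : measurable_fun setT c.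
  apply: measurable_minr; first apply: measurable_maxr => //.
    by apply: measurable_funM => //; exact: measurable_cst.
  by apply: measurable_funM => //; exact: measurable_cst.
have cf z := @clip_facts R (rho1 z) (ei * rho2 z) (ee * rho2 z)
   (ler_wpM2r (r2p z) (le_trans ei1 ee1)).
have c0 z : 0 <= c z.
  have [h _ _ _] := cf z; apply: le_trans h; exact: mulr_ge0 (ltW ei0) (r2p z).
have intZ (k : R) (f : Z -> R) : 0 <= k -> measurable_fun setT f -> (forall z, 0 <= f z) ->
    (\int[Q]_z ((k * f z)%:E) = k%:E * \int[Q]_z (f z)%:E)%E.
  move=> k0 mf f0; under eq_integral do rewrite EFinM.
  apply: ge0_integralZl_EFin => //.
  - by move=> x _; rewrite lee_fin.
  - exact/measurable_EFinP.
have intc_le : (\int[Q]_z (c z)%:E <= ee%:E)%E.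
  apply: (@le_trans _ _ (\int[Q]_z (ee * rho2 z)%:E)%E).
    apply: ge0_le_integral => //.
    - by move=> x _; rewrite lee_fin.
    - exact/measurable_EFinP.
    - exact/measurable_EFinP/measurable_funM/m2/measurable_cst.
    - by move=> x _; rewrite lee_fin; have [] := cf x.
  by rewrite intZ ?int2 ?mule1 // (le_trans ler01 ee1).
have intc_ge0 : (0 <= \int[Q]_z (c z)%:E)%E.
  by apply: integral_ge0 => x _; rewrite lee_fin.
pose I := fine (\int[Q]_z (c z)%:E).
have cI : (\int[Q]_z (c z)%:E = I%:E)%E.
  rewrite /I fineK // ge0_fin_numE //; exact: le_lt_trans intc_le (ltry _).
have I0 : 0 <= I by rewrite -lee_fin -cI.
have Iee : I <= ee by rewrite -lee_fin -cI.
pose k := if I <= 1 then ee else ei.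
pose t := (1 - I) / (k - I).
have t01 : 0 <= t <= 1.
  rewrite /t /k; case: ifP => hI.
    apply: div01; apply/andP; split; lra.
  rewrite -divrNN; apply: div01; apply/andP; split; move/negbT: hI; rewrite -ltNge => hI; lra.
have tI : (1 - t) * I + t * k = 1.
  rewrite /t /k; case: ifP => hI.
    have [e|ne] := eqVneq (ee - I) 0.
      have -> : I = 1 by lra.
      by rewrite subrr mul0r mul0r subr0 !mul1r addr0.
    by field.
  move/negbT: hI; rewrite -ltNge => hI.
  have ne : ei - I != 0 by apply/eqP; lra.
  by field.
have k0 : 0 <= k by rewrite /k; case: ifP => _; lra.
have kb z : ei * rho2 z <= k * rho2 z <= ee * rho2 z.
  have := r2p z; rewrite /k; case: ifP => _ ?; apply/andP; split; nra.
pose rho3 z := (1 - t) * c z + t * (k * rho2 z).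
have m2k : measurable_fun setT (fun z => k * rho2 z).
  exact/measurable_funM/m2/measurable_cst.
have m3 : measurable_fun setT rho3.
  apply: measurable_funD; apply: measurable_funM => //; exact: measurable_cst.
have b3 z : ei * rho2 z <= rho3 z <= ee * rho2 z.
  have [h1 h2 _ _] := cf z; have /andP[h3 h4] := kb z.
  move/andP: t01 => [t0 t1].
  rewrite /rho3; apply/andP; split; rewrite -/(c z) in h1 h2; nra.
have r3p z : 0 <= rho3 z.
  have /andP[h _] := b3 z; apply: le_trans h; exact: mulr_ge0 (ltW ei0) (r2p z).
have int3 : (\int[Q]_x (rho3 x)%:E = 1)%E.
  rewrite /rho3; under eq_integral do rewrite EFinD.
  rewrite ge0_integralD //; last 4 first.
  - by move=> x _; rewrite lee_fin; apply: mulr_ge0 => //; move/andP: t01 => [_]; rewrite subr_ge0.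
  - exact/measurable_EFinP/measurable_funM/mc/measurable_cst.
  - by move=> x _; rewrite lee_fin; apply: mulr_ge0; [case/andP: t01|apply: mulr_ge0].
  - exact/measurable_EFinP/measurable_funM/m2k/measurable_cst.
  have ht0 : 0 <= t by case/andP: t01.
  have ht1 : 0 <= 1 - t by case/andP: t01; rewrite subr_ge0.
  rewrite (intZ (1 - t) c ht1 mc c0).
  rewrite (intZ t _ ht0 m2k); last by move=> z; apply: mulr_ge0.
  by rewrite intZ // int2 cI mule1 -!EFinM -EFinD tI.
have dens3 : is_density Q (@dens _ _ _ Q rho3 m3 r3p int3) rho3 by split.
exists (@dens _ _ _ Q rho3 m3 r3p int3), rho3; split => //.
- move=> N NQ A mA AN; rewrite /= /dens null_set_integral //.
    exact/measurable_EFinP/measurable_funTS.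
  exact: NQ.
- case: (boolP (I <= 1)) => hI.
    apply: (@tv_bound _ _ _ _ _ _ _ _ (fun z => Num.max (rho1 z - ee * rho2 z) 0) _ dens1 dens3) => //.
    + apply: measurable_maxr; last exact: measurable_cst.
      apply: measurable_funB => //; exact/measurable_funM/m2/measurable_cst.
    + by move=> z; rewrite le_max lexx orbT.
    + move=> z; have [h1 h2 h3 _] := cf z.
      have kk : k = ee by rewrite /k hI.
      move/andP: t01 => [t0 t1].
      rewrite /rho3 kk; rewrite -/(c z) in h1 h2 h3; nra.
  rewrite dTV_sym.
  apply: (@tv_bound _ _ _ _ _ _ _ _ (fun z => Num.max (rho2 z - ee * rho1 z) 0) _ dens3 dens1) => //.
  + apply: measurable_maxr; last exact: measurable_cst.
    apply: measurable_funB => //; exact/measurable_funM/m1/measurable_cst.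
  + by move=> z; rewrite le_max lexx orbT.
  + move=> z; have [h1 h2 _ h4] := cf z.
    have kk : k = ei by rewrite /k (negbTE hI).
    have hs := @max_scale R ei (rho2 z - ee * rho1 z).
    have e1 : ei * (rho2 z - ee * rho1 z) = ei * rho2 z - rho1 z.
      by rewrite mulrBr mulrA eie mul1r.
    rewrite e1 in hs; have {}hs := hs (ltac:(apply/andP; split => //)).
    move/andP: t01 => [t0 t1].
    rewrite /rho3 kk; rewrite -/(c z) in h1 h2 h4; nra.
- exact: aeW.
Qed.
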